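(* Let $R$ be a commutative ring and work with non-negatively graded chain complexes of $R$-modules. Then: (i) Every chain complex is $S^0$-cellular. (ii) If $X$ is acyclic (all homology groups vanish), then $X \gg A$ for every chain complex $A$. (iii) For every chain complex $A$, the collection $\mathcal{C}(A)$ is closed under retracts. (iv) Suppose $A$ is a cofibrant chain complex. If $X \gg A$ and $H_0(A) \neq 0$, then there exist a set $I$ and a chain map $f\colon \bigoplus_{I} A \to X$ such that $H_0(f)$ is surjective. (v) If $X \gg A$, then $\Sigma^n X \gg A$ for all $n \geq 0$. (vi) $\Sigma^1 X \gg \Sigma^1 A$ if and only if $X \gg A$.
   Context: All chain complexes are non-negatively graded chain complexes of $R$-modules with homologically graded differentials (lowering degree). A weak equivalence is a chain map inducing an isomorphism on homology. A chain complex is cofibrant if it consists of projective modules in each degree. For a chain complex $A$, $\mathcal{C}(A)$ denotes the smallest collection of chain complexes that (1) contains $A$, (2) is closed under arbitrary direct sums and under weak equivalences (a complex weakly equivalent to a member is a member), and (3) whenever $0 \to X \to Y \to Z \to 0$ is a short exact sequence of chain complexes with $X, Y \in \mathcal{C}(A)$, also $Z \in \mathcal{C}(A)$. One writes $X \gg A$ (''$X$ is $A$-cellular'') if $X \in \mathcal{C}(A)$. $S^n = S^n(R)$ is the complex with $R$ in degree $n$ and $0$ elsewhere. $\Sigma^i$ is the shift: $(\Sigma^i X)_j = X_{j-i}$ with differential $(-1)^i \partial$. *)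

(* Defs.v *)
From HB Require Import structures.
From mathcomp Require Import all_boot all_order all_algebra.
Set Implicit Arguments. Unset Strict Implicit. Unset Printing Implicit Defensive.
Import Order.TTheory GRing.Theory Num.Theory.
Local Open Scope ring_scope.

Section ChainComplexes.
Variable R : comPzRingType.

Definition Rlinear (U V : lmodType R) (f : U -> V) : Prop :=
  GRing.linear_for *:%R f.

Unset Implicit Arguments.
Record chain := Chain {
  cmod : nat -> lmodType R;
  cd : forall n, cmod n.+1 -> cmod n;
  cd_lin : forall n, Rlinear (cd n);
  cd_dd : forall n x, cd n (cd n.+1 x) = 0 }.

Record chainmap (X Y : chain) := ChainMap {
  cmap : forall n, cmod X n -> cmod Y n;
  cmap_lin : forall n, Rlinear (cmap n);
  cmap_comm : forall n x, cmap n (cd X n x) = cd Y n (cmap n.+1 x) }.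

Set Implicit Arguments.
Arguments cmap {X Y} c n _.

Definition is_cycle (X : chain) (n : nat) : cmod X n -> Prop :=
  match n return cmod X n -> Prop with
  | 0 => fun _ => True
  | k.+1 => fun x => cd X k x = 0
  end.

Definition is_boundary (X : chain) (n : nat) (x : cmod X n) : Prop :=
  exists y : cmod X n.+1, cd X n y = x.

(* H_n(f) : H_n(X) -> H_n(Y) = Z_n/B_n is injective / surjective. *)
Definition Hinj (X Y : chain) (f : chainmap X Y) (n : nat) : Prop :=
  forall x : cmod X n, is_cycle x -> is_boundary (cmap f n x) -> is_boundary x.

Definition Hsurj (X Y : chain) (f : chainmap X Y) (n : nat) : Prop :=
  forall y : cmod Y n, is_cycle y ->
    exists x : cmod X n, is_cycle x /\ is_boundary (cmap f n x - y).

Definition weq (X Y : chain) (f : chainmap X Y) : Prop :=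
  forall n, Hinj f n /\ Hsurj f n.

Definition acyclic (X : chain) : Prop :=
  forall n (x : cmod X n), is_cycle x -> is_boundary x.

Definition H_nonzero (X : chain) (n : nat) : Prop :=
  exists x : cmod X n, is_cycle x /\ ~ is_boundary x.

Definition projective (P : lmodType R) : Prop :=
  forall (M N : lmodType R) (p : M -> N) (g : P -> N),
    Rlinear p -> Rlinear g -> (forall y : N, exists x : M, p x = y) ->
    exists h : P -> M, Rlinear h /\ forall x, p (h x) = g x.

Definition cofibrant (X : chain) : Prop := forall n, projective (cmod X n).

Definition is_dsum (I : Type) (X : I -> chain) (Y : chain)
    (iota : forall i, chainmap (X i) Y) : Prop :=
  forall (Z : chain) (g : forall i, chainmap (X i) Z),
    exists h : chainmap Y Z,
      (forall i n x, cmap h n (cmap (iota i) n x) = cmap (g i) n x) /\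
      (forall h' : chainmap Y Z,
         (forall i n x, cmap h' n (cmap (iota i) n x) = cmap (g i) n x) ->
         forall n y, cmap h' n y = cmap h n y).

Definition ses (X Y Z : chain) (i : chainmap X Y) (p : chainmap Y Z) : Prop :=
  forall n, injective (cmap i n) /\
    (forall z : cmod Z n, exists y, cmap p n y = z) /\
    (forall y : cmod Y n, cmap p n y = 0 <-> exists x, cmap i n x = y).

Definition retract (X Y : chain) : Prop :=
  exists (s : chainmap X Y) (r : chainmap Y X),
    forall n (x : cmod X n), cmap r n (cmap s n x) = x.

Definition closedC (A : chain) (P : chain -> Prop) : Prop :=
  P A /\
  (forall (I : Type) (X : I -> chain) (Y : chain)
          (iota : forall i, chainmap (X i) Y),
     @is_dsum I X Y iota -> (forall i, P (X i)) -> P Y) /\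
  (forall (X Y : chain) (f : chainmap X Y), weq f -> (P X <-> P Y)) /\
  (forall (X Y Z : chain) (i : chainmap X Y) (p : chainmap Y Z),
     ses i p -> P X -> P Y -> P Z).

(* X >> A : X belongs to the smallest such collection C(A) *)
Definition cellular (X A : chain) : Prop :=
  forall P : chain -> Prop, closedC A P -> P X.

Definition zmod0 : lmodType R := 'rV[R]_0.

Lemma lin_zero (U V : lmodType R) : Rlinear (fun _ : U => (0 : V)).
Proof. by move=> a u v; rewrite scaler0 addr0. Qed.

Definition S0mod (n : nat) : lmodType R :=
  match n with 0 => (R^o : lmodType R) | _.+1 => zmod0 end.

Definition S0 : chain :=
  @Chain S0mod (fun n _ => 0) (fun n => @lin_zero _ _) (fun n x => erefl).

Section Shift.
Variable X : chain.

Definition shmod (n : nat) : lmodType R :=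
  match n with 0 => zmod0 | k.+1 => cmod X k end.

Definition shd (n : nat) : shmod n.+1 -> shmod n :=
  match n return shmod n.+1 -> shmod n with
  | 0 => fun _ => 0
  | k.+1 => fun x => - cd X k x
  end.

Lemma shd_lin n : Rlinear (@shd n).
Proof.
case: n => [|k] /=; first exact: lin_zero.
move=> a u v; rewrite (cd_lin X k) opprD scalerN //.
Qed.

Lemma shd_dd n x : @shd n (@shd n.+1 x) = 0.
Proof.
case: n x => [|k] x //=.
have h0 : cd X k 0 = 0.
  have H := cd_lin X k 1 0 0.
  rewrite scale1r !addr0 scale1r in H.
  have := congr1 (fun z => z - cd X k 0) H.
  by rewrite /= subrr addrK.
have := cd_lin X k (-1) (cd X k.+1 x) 0.
rewrite addr0 h0 addr0 scaleN1r => ->.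
by rewrite cd_dd scaler0 oppr0.
Qed.

Definition shift : chain := @Chain shmod (@shd) shd_lin shd_dd.
End Shift.

Definition shiftn (n : nat) (X : chain) : chain := iter n shift X.

End ChainComplexes.

Arguments cmod {R} c n.
Arguments cd {R} c n _.
Arguments chainmap {R} X Y.
Arguments cmap {R X Y} c n _.
Arguments S0 R.

(* Main.v *)
From HB Require Import structures.
From mathcomp Require Import all_boot all_order all_algebra.
From mathcomp Require Import boolp.
Require Import Defs.
From Stdlib Require Import ProofIrrelevance FunctionalExtensionality.
Set Implicit Arguments. Unset Strict Implicit. Unset Printing Implicit Defensive.
Import GRing.Theory.
Local Open Scope ring_scope.

Section Lin.
Variables (R : comPzRingType) (U V : lmodType R) (f : U -> V) (hf : Rlinear f).
Lemma lin0 : f 0 = 0.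
Proof.
have H := hf 1 0 0. rewrite scale1r !addr0 scale1r in H.
have := congr1 (fun z => z - f 0) H. by rewrite /= subrr addrK.
Qed.
Lemma linD x y : f (x + y) = f x + f y.
Proof. by have := hf 1 x y; rewrite !scale1r. Qed.
Lemma linZ a x : f (a *: x) = a *: f x.
Proof. by have := hf a x 0; rewrite !addr0 lin0 addr0. Qed.
Lemma linN x : f (- x) = - f x.
Proof. by rewrite -scaleN1r linZ scaleN1r. Qed.
Lemma linB x y : f (x - y) = f x - f y.
Proof. by rewrite linD linN. Qed.
Lemma lin_sum (I : Type) (s : seq I) (F : I -> U) :
  f (\sum_(i <- s) F i) = \sum_(i <- s) f (F i).
Proof.
elim: s => [|a s IH]; first by rewrite !big_nil lin0.
by rewrite !big_cons linD IH.
Qed.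
End Lin.

Lemma lin_comp (R : comPzRingType) (U V W : lmodType R) (f : U -> V) (g : V -> W) :
  Rlinear f -> Rlinear g -> Rlinear (fun x => g (f x)).
Proof. by move=> hf hg a u v; rewrite hf hg. Qed.
Lemma lin_id (R : comPzRingType) (U : lmodType R) : Rlinear (fun x : U => x).
Proof. by []. Qed.
Lemma lin_add (R : comPzRingType) (U V : lmodType R) (f g : U -> V) :
  Rlinear f -> Rlinear g -> Rlinear (fun x => f x + g x).
Proof. move=> hf hg a u v; rewrite hf hg scalerDr.
by rewrite -!addrA; congr (_ + _); rewrite [RHS]addrC -!addrA; congr (_ + _); rewrite addrC. Qed.
Lemma lin_opp (R : comPzRingType) (U V : lmodType R) (f : U -> V) :
  Rlinear f -> Rlinear (fun x => - f x).
Proof. move=> hf a u v; by rewrite hf opprD scalerN. Qed.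

Lemma z0 (R : comPzRingType) (x : zmod0 R) : x = 0.
Proof. exact: thinmx0. Qed.

Section Chains.
Variable R : comPzRingType.
Implicit Types X Y Z : chain R.

Lemma cdd X n x : cd X n (cd X n.+1 x) = 0. Proof. exact: cd_dd. Qed.
Lemma cmc X Y (f : chainmap X Y) n x : cmap f n (cd X n x) = cd Y n (cmap f n.+1 x).
Proof. exact: cmap_comm. Qed.

Lemma cd0 X n : cd X n 0 = 0. Proof. exact: (@lin0 R _ _ (cd X n) (cd_lin _ X n)). Qed.
Lemma cdD X n (x y : cmod X n.+1) : cd X n (x + y) = cd X n x + cd X n y. Proof. exact: (@linD R _ _ (cd X n) (cd_lin _ X n) x y). Qed.
Lemma cdN X n (x : cmod X n.+1) : cd X n (- x) = - cd X n x. Proof. exact: (@linN R _ _ (cd X n) (cd_lin _ X n)). Qed.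
Lemma cdB X n (x y : cmod X n.+1) : cd X n (x - y) = cd X n x - cd X n y. Proof. exact: (@linB R _ _ (cd X n) (cd_lin _ X n)). Qed.
Lemma cdZ X n a (x : cmod X n.+1) : cd X n (a *: x) = a *: cd X n x. Proof. exact: (@linZ R _ _ (cd X n) (cd_lin _ X n)). Qed.
Lemma cd_sum X n (I : Type) (s : seq I) (F : I -> cmod X n.+1) : cd X n (\sum_(i <- s) F i) = \sum_(i <- s) cd X n (F i).
Proof. exact: (@lin_sum R _ _ (cd X n) (cd_lin _ X n)). Qed.

Lemma cm0 X Y (f : chainmap X Y) n : cmap f n 0 = 0. Proof. exact: (@lin0 R _ _ (cmap f n) (cmap_lin _ _ _ f n)). Qed.
Lemma cmD X Y (f : chainmap X Y) n (x y : cmod X n) : cmap f n (x + y) = cmap f n x + cmap f n y.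
Proof. exact: (@linD R _ _ (cmap f n) (cmap_lin _ _ _ f n)). Qed.
Lemma cmN X Y (f : chainmap X Y) n (x : cmod X n) : cmap f n (- x) = - cmap f n x.
Proof. exact: (@linN R _ _ (cmap f n) (cmap_lin _ _ _ f n)). Qed.
Lemma cmB X Y (f : chainmap X Y) n (x y : cmod X n) : cmap f n (x - y) = cmap f n x - cmap f n y.
Proof. exact: (@linB R _ _ (cmap f n) (cmap_lin _ _ _ f n)). Qed.
Lemma cmZ X Y (f : chainmap X Y) n a (x : cmod X n) : cmap f n (a *: x) = a *: cmap f n x.
Proof. exact: (@linZ R _ _ (cmap f n) (cmap_lin _ _ _ f n)). Qed.
Lemma cm_sum X Y (f : chainmap X Y) n (I : Type) (s : seq I) (F : I -> cmod X n) :
  cmap f n (\sum_(i <- s) F i) = \sum_(i <- s) cmap f n (F i).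
Proof. exact: (@lin_sum R _ _ (cmap f n) (cmap_lin _ _ _ f n)). Qed.

Definition idC X : chainmap X X :=
  @ChainMap R X X (fun n x => x) (fun n => @lin_id _ _) (fun n x => erefl).

Definition compC X Y Z (g : chainmap Y Z) (f : chainmap X Y) : chainmap X Z.
Proof.
refine (@ChainMap R X Z (fun n x => cmap g n (cmap f n x))
   (fun n => lin_comp (cmap_lin _ _ _ f n) (cmap_lin _ _ _ g n)) _).
by move=> n x; rewrite !cmc.
Defined.

Lemma bd0 X n : is_boundary (0 : cmod X n).
Proof. by exists 0; rewrite cd0. Qed.
Lemma bdD X n (x y : cmod X n) : is_boundary x -> is_boundary y -> is_boundary (x + y).
Proof. by move=> [a <-] [b <-]; exists (a + b); rewrite cdD. Qed.
Lemma bdN X n (x : cmod X n) : is_boundary x -> is_boundary (- x).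
Proof. by move=> [a <-]; exists (- a); rewrite cdN. Qed.
Lemma bdB X n (x y : cmod X n) : is_boundary x -> is_boundary y -> is_boundary (x - y).
Proof. by move=> hx hy; apply: bdD => //; apply: bdN. Qed.
Lemma bdZ X n a (x : cmod X n) : is_boundary x -> is_boundary (a *: x).
Proof. by move=> [b <-]; exists (a *: b); rewrite cdZ. Qed.
Lemma bd_sum X n (I : Type) (s : seq I) (F : I -> cmod X n) :
  (forall i, is_boundary (F i)) -> is_boundary (\sum_(i <- s) F i).
Proof. move=> h; elim: s => [|a s IH]; rewrite ?big_nil ?big_cons; [exact: bd0| exact: bdD]. Qed.
Lemma bdcm X Y (f : chainmap X Y) n (x : cmod X n) : is_boundary x -> is_boundary (cmap f n x).
Proof. by move=> [a <-]; exists (cmap f n.+1 a); rewrite cmc. Qed.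
Lemma bd_cd X n (x : cmod X n.+1) : is_boundary (cd X n x).
Proof. by exists x. Qed.

Lemma cyD X n (x y : cmod X n) : is_cycle x -> is_cycle y -> is_cycle (x + y).
Proof. by case: n x y => //= n x y hx hy; rewrite cdD hx hy addr0. Qed.
Lemma cyN X n (x : cmod X n) : is_cycle x -> is_cycle (- x).
Proof. by case: n x => //= n x hx; rewrite cdN hx oppr0. Qed.
Lemma cy0 X n : is_cycle (0 : cmod X n).
Proof. by case: n => //= n; rewrite cd0. Qed.
Lemma cycm X Y (f : chainmap X Y) n (x : cmod X n) : is_cycle x -> is_cycle (cmap f n x).
Proof. by case: n x => //= n x hx; rewrite -cmc hx cm0. Qed.
Lemma cy_bd X n (x : cmod X n) : is_boundary x -> is_cycle x.
Proof. by case: n x => //= n x [y <-]; rewrite cdd. Qed.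

Lemma bij_weq X Y (f : chainmap X Y) :
  (forall n, injective (cmap f n)) -> (forall n y, exists x, cmap f n x = y) -> weq f.
Proof.
move=> hi hs n; split.
  move=> x _ [y' e]. have [y ey] := hs n.+1 y'. exists y; apply: (hi n).
  by rewrite cmc ey.
move=> y hy. have [x ex] := hs n y. exists x; split; last by rewrite ex subrr; exact: bd0.
move: hy; rewrite -ex; clear ex y; case: n hi hs x => //= n hi hs x hx; apply: (hi n).
by rewrite cmc hx cm0.
Qed.

Lemma weq_comp X Y Z (f : chainmap X Y) (g : chainmap Y Z) : weq f -> weq g -> weq (compC g f).
Proof.
move=> hf hg n; split.
  move=> x hx hb; apply: (proj1 (hf n)) => //; apply: (proj1 (hg n)) => //; exact: cycm.
move=> z hz. have [y [hy hby]] := proj2 (hg n) z hz. have [x [hx hbx]] := proj2 (hf n) y hy.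
exists x; split => //=.
have -> : cmap g n (cmap f n x) - z = cmap g n (cmap f n x - y) + (cmap g n y - z).
  by rewrite cmB addrA subrK.
by apply: bdD => //; apply: bdcm.
Qed.

Section Closed.
Variables (A : chain R) (P : chain R -> Prop) (hP : closedC A P).
Lemma P_A : P A. Proof. by case: hP. Qed.
Lemma P_dsum (I : Type) (X : I -> chain R) Y iota : @is_dsum R I X Y iota -> (forall i, P (X i)) -> P Y.
Proof. by case: hP => _ [h _]; apply: h. Qed.
Lemma P_weq X Y (f : chainmap X Y) : weq f -> P X -> P Y.
Proof. by case: hP => _ [_ [h _]] hf; apply: (proj1 (h _ _ f hf)). Qed.
Lemma P_weqr X Y (f : chainmap X Y) : weq f -> P Y -> P X.
Proof. by case: hP => _ [_ [h _]] hf; apply: (proj2 (h _ _ f hf)). Qed.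
Lemma P_ses X Y Z (i : chainmap X Y) (p : chainmap Y Z) : ses i p -> P X -> P Y -> P Z.
Proof. by case: hP => _ [_ [_ h]]; apply: h. Qed.
End Closed.

End Chains.
Section Pairs.
Variables (R : comPzRingType) (U V : lmodType R).
Lemma pairD (x1 x2 : U) (y1 y2 : V) : (x1, y1) + (x2, y2) = (x1 + x2, y1 + y2) :> (U * V)%type. Proof. by []. Qed.
Lemma pairZ a (x1 : U) (y1 : V) : a *: (x1, y1) = (a *: x1, a *: y1) :> (U * V)%type. Proof. by []. Qed.
Lemma pair0 : 0 = (0, 0) :> (U * V)%type. Proof. by []. Qed.
Lemma pairN (x1 : U) (y1 : V) : - (x1, y1) = (- x1, - y1) :> (U * V)%type. Proof. by []. Qed.
Lemma fstD (u v : (U * V)%type) : (u + v).1 = u.1 + v.1. Proof. by []. Qed.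
Lemma sndD (u v : (U * V)%type) : (u + v).2 = u.2 + v.2. Proof. by []. Qed.
Lemma fstZ a (u : (U * V)%type) : (a *: u).1 = a *: u.1. Proof. by []. Qed.
Lemma sndZ a (u : (U * V)%type) : (a *: u).2 = a *: u.2. Proof. by []. Qed.
End Pairs.
Lemma addsub4 (V : zmodType) (a b c d : V) : a + b - (c + d) = (a - c) + (b - d).
Proof. by rewrite opprD addrACA. Qed.
Lemma subsub3 (V : zmodType) (a b c : V) : (a - c) - (a - b) = b - c.
Proof. by rewrite opprB addrC addrA subrK. Qed.
Lemma subsub4 (V : zmodType) (a b c : V) : (a - b) - (c - b) = a - c.
Proof. by rewrite opprB addrA subrK. Qed.

Section DSum.
Variable R : comPzRingType.
Variable I : Type.
Variable M : I -> lmodType R.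

Definition Ic : eqType := {classic I}.
Definition finsupp (f : forall i, M i) : Prop :=
  exists s : seq Ic, forall i : Ic, i \notin s -> f i = 0.

Record dsT := DS { dv : forall i, M i ; dfs : finsupp dv }.

Lemma dsT_eq (u v : dsT) : (forall i, dv u i = dv v i) -> u = v.
Proof.
case: u v => [u hu] [v hv] /= h.
have e : u = v by apply: functional_extensionality_dep.
subst v. by rewrite (proof_irrelevance _ hu hv).
Qed.

HB.instance Definition _ := gen_eqMixin dsT.
HB.instance Definition _ := gen_choiceMixin dsT.

Lemma fs0 : finsupp (fun i => 0). Proof. by exists [::]. Qed.
Lemma fsD u v : finsupp u -> finsupp v -> finsupp (fun i => u i + v i).
Proof. move=> [s hs] [t ht]; exists (s ++ t) => i; rewrite mem_cat negb_or => /andP[a b].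
by rewrite hs // ht // addr0. Qed.
Lemma fsZ a u : finsupp u -> finsupp (fun i => a *: u i).
Proof. move=> [s hs]; exists s => i hi; by rewrite hs // scaler0. Qed.
Lemma fsN u : finsupp u -> finsupp (fun i => - u i).
Proof. move=> [s hs]; exists s => i hi; by rewrite hs // oppr0. Qed.

Definition ds0 := DS fs0.
Definition dsadd (u v : dsT) := DS (fsD (dfs u) (dfs v)).
Definition dsopp (u : dsT) := DS (fsN (dfs u)).
Definition dsscale a (u : dsT) := DS (fsZ a (dfs u)).

Lemma dsaddA : associative dsadd. Proof. by move=> ???; apply: dsT_eq => i /=; rewrite addrA. Qed.
Lemma dsaddC : commutative dsadd. Proof. by move=> ??; apply: dsT_eq => i /=; rewrite addrC. Qed.
Lemma dsadd0 : left_id ds0 dsadd. Proof. by move=> ?; apply: dsT_eq => i /=; rewrite add0r. Qed.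
Lemma dsaddN : left_inverse ds0 dsopp dsadd. Proof. by move=> ?; apply: dsT_eq => i /=; rewrite addNr. Qed.
HB.instance Definition _ := GRing.isZmodule.Build dsT dsaddA dsaddC dsadd0 dsaddN.
Lemma dsZA a b v : dsscale a (dsscale b v) = dsscale (a * b) v.
Proof. by apply: dsT_eq => i /=; rewrite scalerA. Qed.
Lemma dsZ1 : left_id 1 dsscale. Proof. by move=> ?; apply: dsT_eq => i /=; rewrite scale1r. Qed.
Lemma dsZDr : right_distributive dsscale +%R.
Proof. by move=> ???; apply: dsT_eq => i /=; rewrite scalerDr. Qed.
Lemma dsZDl v : {morph dsscale^~ v: a b / a + b}.
Proof. by move=> ??; apply: dsT_eq => i /=; rewrite scalerDl. Qed.
HB.instance Definition _ := GRing.Zmodule_isLmodule.Build R dsT dsZA dsZ1 dsZDr dsZDl.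

Definition dsum : lmodType R := dsT.

Lemma dv0 i : dv (0 : dsum) i = 0. Proof. by []. Qed.
Lemma dvD (u v : dsum) i : dv (u + v) i = dv u i + dv v i. Proof. by []. Qed.
Lemma dvN (u : dsum) i : dv (- u) i = - dv u i. Proof. by []. Qed.
Lemma dvZ a (u : dsum) i : dv (a *: u) i = a *: dv u i. Proof. by []. Qed.
Lemma dv_sum (J : Type) (s : seq J) (F : J -> dsum) i :
  dv (\sum_(j <- s) F j) i = \sum_(j <- s) dv (F j) i.
Proof. elim: s => [|a s IH]; by rewrite ?big_nil ?big_cons ?dvD ?IH. Qed.
Lemma dsE (u v : dsum) : (forall i, dv u i = dv v i) -> u = v.
Proof. exact: dsT_eq. Qed.

Lemma finsupp_uniq (u : dsum) : exists s : seq Ic, uniq s /\ forall i, i \notin s -> dv u i = 0.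
Proof.
case: (dfs u) => s hs; exists (undup s); split; first exact: undup_uniq.
by move=> i; rewrite mem_undup; apply: hs.
Qed.
Definition supp (u : dsum) : seq Ic := sval (cid (finsupp_uniq u)).
Lemma supp_uniq u : uniq (supp u). Proof. exact: (proj1 (svalP (cid (finsupp_uniq u)))). Qed.
Lemma supp_out u i : i \notin supp u -> dv u i = 0.
Proof. exact: (proj2 (svalP (cid (finsupp_uniq u)))). Qed.

Definition injf (i : I) (x : M i) : forall j, M j :=
  fun j => match pselect (i = j) with left e => eq_rect i M x j e | right _ => 0 end.
Lemma injf_same i (x : M i) : injf x i = x.
Proof. rewrite /injf; case: pselect => // e; by rewrite (proof_irrelevance _ e erefl). Qed.
Lemma injf_other i (x : M i) j : i <> j -> injf x j = 0.
Proof. by rewrite /injf; case: pselect. Qed.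
Lemma fs_inj i (x : M i) : finsupp (@injf i x).
Proof. exists [:: (i : Ic)] => j; rewrite inE => /eqP h; apply: injf_other => e; apply: h; by rewrite e. Qed.
Definition dinj i (x : M i) : dsum := DS (fs_inj x).
Lemma dinj_same i (x : M i) : dv (@dinj i x) i = x. Proof. exact: injf_same. Qed.
Lemma dinj_other i (x : M i) j : i <> j -> dv (@dinj i x) j = 0. Proof. exact: injf_other. Qed.
Lemma dinj_lin i : Rlinear (@dinj i).
Proof.
move=> a x y; apply: dsE => j /=; rewrite /injf; case: pselect => [e|_]; last by rewrite scaler0 addr0.
by case: j / e.
Qed.

Section Out.
Variables (N : lmodType R) (G : forall i, M i -> N) (hG : forall i, Rlinear (@G i)).

Lemma sum_indep (F : Ic -> N) (s t : seq Ic) : uniq s -> uniq t ->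
  (forall i, i \notin s -> F i = 0) -> (forall i, i \notin t -> F i = 0) ->
  \sum_(i <- s) F i = \sum_(i <- t) F i.
Proof.
move=> us ut hs ht.
have e1 : \sum_(i <- s) F i = \sum_(i <- s | i \in t) F i.
  rewrite [RHS]big_mkcond /=; apply: eq_bigr => i _; case: ifP => // /negbT; exact: ht.
have e2 : \sum_(i <- t) F i = \sum_(i <- t | i \in s) F i.
  rewrite [RHS]big_mkcond /=; apply: eq_bigr => i _; case: ifP => // /negbT; exact: hs.
rewrite e1 e2 -[LHS]big_filter -[RHS]big_filter; apply: perm_big; apply: uniq_perm; rewrite ?filter_uniq //.
by move=> i; rewrite !mem_filter andbC.
Qed.

Definition dsout (u : dsum) : N := \sum_(i <- supp u) G (dv u i).

Lemma dsoutE u (s : seq Ic) : uniq s -> (forall i, i \notin s -> dv u i = 0) ->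
  dsout u = \sum_(i <- s) G (dv u i).
Proof.
move=> us hs; apply: sum_indep => //; first exact: supp_uniq.
  by move=> i /supp_out ->; rewrite (lin0 (@hG i)).
by move=> i /hs ->; rewrite (lin0 (@hG i)).
Qed.

Lemma dsout_lin : Rlinear dsout.
Proof.
move=> a u v.
set s := undup (supp u ++ supp v).
have us : uniq s by apply: undup_uniq.
have hu : forall i, i \notin s -> dv u i = 0.
  by move=> i; rewrite mem_undup mem_cat negb_or => /andP[h _]; apply: supp_out.
have hv : forall i, i \notin s -> dv v i = 0.
  by move=> i; rewrite mem_undup mem_cat negb_or => /andP[_ h]; apply: supp_out.
rewrite (dsoutE us hu) (dsoutE us hv) (dsoutE us); last first.
  by move=> i hi /=; rewrite hu // hv // scaler0 addr0.
rewrite scaler_sumr -big_split /=; apply: eq_bigr => i _.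
by rewrite /= (@hG i).
Qed.

Lemma dsout_inj i (x : M i) : dsout (@dinj i x) = G x.
Proof.
rewrite (@dsoutE _ [:: (i : Ic)]) //; first by rewrite big_seq1 dinj_same.
move=> j; rewrite inE => /eqP h; apply: dinj_other => e; apply: h; by rewrite e.
Qed.
End Out.

Lemma ds_decomp (u : dsum) (s : seq Ic) : uniq s -> (forall i, i \notin s -> dv u i = 0) ->
  u = \sum_(i <- s) dinj (dv u i).
Proof.
move=> us hs; apply: dsE => j; rewrite dv_sum.
case: (boolP ((j : Ic) \in s)) => hj.
  rewrite (bigD1_seq (j : Ic)) // dinj_same big1 => [|i hij]; first by rewrite /= addr0.
  apply: dinj_other => e; move: hij; by rewrite e eqxx.
rewrite hs // big1_seq // => i /andP[_ hi]; apply: dinj_other => e; move: hj; by rewrite -e hi.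
Qed.

Lemma dsout_uniq (N : lmodType R) (G : forall i, M i -> N) (h : dsum -> N) :
  (forall i, Rlinear (G i)) -> Rlinear h -> (forall i x, h (@dinj i x) = G i x) ->
  forall u, h u = dsout G u.
Proof.
move=> hG hh e u.
rewrite (dsoutE hG (supp_uniq u) (@supp_out u)) {1}(ds_decomp (supp_uniq u) (@supp_out u)).
rewrite (lin_sum hh); apply: eq_bigr => i _; exact: e.
Qed.

End DSum.

Arguments dinj {R I M} i x.
Arguments dsout {R I M N} G u.

Section DSumC.
Variable R : comPzRingType.
Variable I : Type.
Variable X : I -> chain R.

Definition DCmod n : lmodType R := dsum (fun i => cmod (X i) n).
Lemma fs_cd n (u : DCmod n.+1) : finsupp (fun i => cd (X i) n (dv u i)).
Proof. case: (dfs u) => s hs; exists s => i /hs ->; exact: cd0. Qed.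
Definition DCd n (u : DCmod n.+1) : DCmod n := DS (fs_cd u).
Lemma DCd_lin n : Rlinear (@DCd n).
Proof. move=> a u v; apply: dsE => i /=; by rewrite cdD cdZ. Qed.
Lemma DCd_dd n u : @DCd n (@DCd n.+1 u) = 0.
Proof. apply: dsE => i /=; exact: cdd. Qed.
Definition DC : chain R := @Chain R DCmod DCd DCd_lin DCd_dd.

Lemma dvDC n (u : cmod DC n.+1) i : dv (cd DC n u) i = cd (X i) n (dv u i).
Proof. by []. Qed.

Definition iotaC (i : I) : chainmap (X i) DC.
Proof.
refine (@ChainMap R (X i) DC (fun n x => @dinj _ _ (fun i => cmod (X i) n) i x)
   (fun n => @dinj_lin R I (fun i => cmod (X i) n) i) _).
move=> n x; apply: dsE => j /=; rewrite /injf; case: pselect => [e|_]; last by rewrite cd0.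
by case: j / e.
Defined.

Lemma DC_dsum : is_dsum iotaC.
Proof.
move=> Z g.
have hl : forall n i, Rlinear (cmap (g i) n) by move=> n i; exact: cmap_lin.
have comm : forall n x, dsout (fun i => cmap (g i) n) (cd DC n x)
                        = cd Z n (dsout (fun i => cmap (g i) n.+1) x).
  move=> n x.
  rewrite (dsoutE (hl n.+1) (supp_uniq x) (@supp_out _ _ _ x)).
  rewrite (dsoutE (hl n) (supp_uniq x)); last by move=> i hi; rewrite dvDC supp_out // cd0.
  rewrite cd_sum; apply: eq_bigr => i _; by rewrite dvDC cmc.
exists (@ChainMap R DC Z (fun n => dsout (fun i => cmap (g i) n))
          (fun n => dsout_lin (hl n)) comm).
split; first by move=> i n x /=; rewrite dsout_inj.
move=> h' e n y /=; apply: dsout_uniq; [exact: hl | exact: (cmap_lin _ _ _ h' n) | ].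
move=> i x; exact: (e i n x).
Qed.

End DSumC.

Arguments iotaC {R I} X i.

Lemma dsum_iso (R : comPzRingType) (I : Type) (X : I -> chain R) (Y : chain R)
  (iota : forall i, chainmap (X i) Y) : is_dsum iota ->
  exists phi : chainmap (DC X) Y,
    (forall n, injective (cmap phi n)) /\ (forall n y, exists x, cmap phi n x = y) /\
    (forall i n x, cmap phi n (cmap (iotaC X i) n x) = cmap (iota i) n x).
Proof.
move=> hY.
have [phi [ephi _]] := @DC_dsum R I X Y iota.
have [psi [epsi upsi]] := hY _ (iotaC X).
have [h0 [_ uDC]] := @DC_dsum R I X (DC X) (iotaC X).
have [h1 [_ uY]] := hY _ iota.
have k1 : forall n x, cmap psi n (cmap phi n x) = x.
  move=> n x.
  have e1 := uDC (compC psi phi) (fun i m z => etrans (f_equal _ (ephi i m z)) (epsi i m z)) n x.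
  have e2 := uDC (idC (DC X)) (fun i m z => erefl) n x.
  by rewrite /= in e1 e2; rewrite e1 -e2.
have k2 : forall n y, cmap phi n (cmap psi n y) = y.
  move=> n y.
  have e1 := uY (compC phi psi) (fun i m z => etrans (f_equal _ (epsi i m z)) (ephi i m z)) n y.
  have e2 := uY (idC Y) (fun i m z => erefl) n y.
  by rewrite /= in e1 e2; rewrite e1 -e2.
exists phi; split; last split.
- by move=> n x1 x2 e; rewrite -(k1 n x1) e k1.
- by move=> n y; exists (cmap psi n y); apply: k2.
- exact: ephi.
Qed.

Section Constr.
Variable R : comPzRingType.
Implicit Types X Y Z A B C : chain R.

Lemma shd0 X n : @shd R X n 0 = 0. Proof. exact: (lin0 (@shd_lin R X n)). Qed.
Lemma shdD X n x y : @shd R X n (x + y) = shd x + shd y. Proof. exact: (linD (@shd_lin R X n)). Qed.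
Lemma shdN X n x : @shd R X n (- x) = - shd x. Proof. exact: (linN (@shd_lin R X n)). Qed.
Lemma shdZ X n a x : @shd R X n (a *: x) = a *: shd x. Proof. exact: (linZ (@shd_lin R X n)). Qed.

Definition zeroC X Y : chainmap X Y :=
  @ChainMap R X Y (fun n _ => 0) (fun n => @lin_zero R _ _) (fun n x => esym (cd0 Y n)).

Definition PCmod C B n : lmodType R := (cmod C n * cmod B n)%type.
Definition PCd C B n (x : PCmod C B n.+1) : PCmod C B n := (cd C n x.1, cd B n x.2).
Lemma PCd_lin C B n : Rlinear (@PCd C B n).
Proof. by move=> a u v; rewrite /PCd fstD fstZ sndD sndZ cdD cdZ cdD cdZ pairZ pairD. Qed.
Lemma PCd_dd C B n x : @PCd C B n (@PCd C B n.+1 x) = 0.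
Proof. by rewrite /PCd /= !cdd. Qed.
Definition PC C B : chain R := @Chain R (PCmod C B) (@PCd C B) (@PCd_lin C B) (@PCd_dd C B).

Definition bfam C B (b : bool) : chain R := if b then C else B.
Definition PCinl C B : chainmap C (PC C B).
Proof.
refine (@ChainMap R C (PC C B) (fun n x => (x, 0)) _ _).
- by move=> n a u v; rewrite /= pairZ pairD scaler0 addr0.
- by move=> n x; rewrite /= /PCd /= cd0.
Defined.
Definition PCinr C B : chainmap B (PC C B).
Proof.
refine (@ChainMap R B (PC C B) (fun n x => (0, x)) _ _).
- by move=> n a u v; rewrite /= pairZ pairD scaler0 addr0.
- by move=> n x; rewrite /= /PCd /= cd0.
Defined.
Definition PCinj C B (b : bool) : chainmap (bfam C B b) (PC C B) :=
  match b return chainmap (bfam C B b) (PC C B) with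
  | true => PCinl C B | false => PCinr C B end.

Lemma PC_dsum C B : is_dsum (PCinj C B).
Proof.
move=> Z g.
pose h n (x : cmod (PC C B) n) := cmap (g true) n x.1 + cmap (g false) n x.2.
have hl : forall n, Rlinear (@h n).
  move=> n a u v; rewrite /h /= !cmD !cmZ scalerDr.
  by rewrite -!addrA; congr (_ + _); rewrite addrCA.
have hc : forall n x, h n (cd (PC C B) n x) = cd Z n (h n.+1 x).
  by move=> n x; rewrite /h /= !cmc cdD.
exists (@ChainMap R (PC C B) Z h hl hc); split.
  by case=> n x; rewrite /= /h /= cm0 ?addr0 ?add0r.
move=> h' e n [x y] /=; rewrite /h /=.
have -> : (x, y) = (x, 0) + (0, y) :> cmod (PC C B) n by rewrite pairD addr0 add0r.
by rewrite cmD (e true n x) (e false n y).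
Qed.

Section Cone.
Variables (A B : chain R) (g : chainmap A B).
Definition Cmod n : lmodType R := (cmod B n * shmod A n)%type.
Definition Cd n (x : Cmod n.+1) : Cmod n := (cd B n x.1 + cmap g n x.2, shd x.2).
Lemma Cd_lin n : Rlinear (@Cd n).
Proof.
move=> a u v; rewrite /Cd !fstD !fstZ !sndD !sndZ cdD cdZ cmD cmZ shdD shdZ pairZ pairD scalerDr.
congr pair; rewrite -!addrA; congr (_ + _); by rewrite addrCA.
Qed.
Lemma Cd_dd n x : @Cd n (@Cd n.+1 x) = 0.
Proof.
rewrite /Cd /= shd_dd cdD cdd add0r; congr pair.
by rewrite cmN cmc addrN.
Qed.
Definition Cone : chain R := @Chain R Cmod Cd Cd_lin Cd_dd.
End Cone.

Lemma Cone_id_acyclic A : acyclic (Cone (idC A)).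
Proof.
case=> [|n] [b a] h.
  exists (0, b); rewrite /= /Cd /= cd0 add0r; congr pair; exact/esym/z0.
have e1 : cd A n b + a = 0 := congr1 fst h.
exists (0, b); rewrite /= /Cd /= cd0 add0r; congr pair.
apply/eqP; rewrite eq_sym -subr_eq0 opprK addrC; exact/eqP.
Qed.

Definition coneIn X : chainmap X (Cone (idC X)).
Proof.
refine (@ChainMap R X (Cone (idC X)) (fun n x => (x, 0)) _ _).
- by move=> n a u v; rewrite pairZ pairD scaler0 addr0.
- by move=> n x; rewrite /= /Cd /= shd0 addr0.
Defined.
Definition coneOut X : chainmap (Cone (idC X)) (shift X).
Proof.
refine (@ChainMap R (Cone (idC X)) (shift X) (fun n x => x.2) _ _).
- by move=> n a u v.
- by move=> n x.
Defined.
Lemma ses_cone X : ses (coneIn X) (coneOut X).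
Proof.
move=> n; split; first by move=> x y /= e; exact: (congr1 fst e).
split; first by move=> z; exists (0, z).
move=> [b a] /=; split; first by move=> ->; exists b.
by case=> x [_ <-].
Qed.

Definition coneI A B (g : chainmap A B) : chainmap A (PC (Cone (idC A)) B).
Proof.
refine (@ChainMap R A (PC (Cone (idC A)) B) (fun n x => ((x, 0), - cmap g n x)) _ _).
- by move=> n a u v; rewrite !pairZ !pairD scaler0 addr0 cmD cmZ opprD scalerN.
- by move=> n x; rewrite /= /PCd /= /Cd /= shd0 addr0 cdN cmc.
Defined.
Definition coneP A B (g : chainmap A B) : chainmap (PC (Cone (idC A)) B) (Cone g).
Proof.
refine (@ChainMap R (PC (Cone (idC A)) B) (Cone g)
   (fun n x => (x.2 + cmap g n x.1.1, x.1.2)) _ _).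
- move=> n a [[u1 u2] u3] [[v1 v2] v3] /=; rewrite cmD cmZ pairZ pairD.
  congr pair; rewrite scalerDr -!addrA; congr (_ + _); by rewrite addrCA.
- by move=> n x; rewrite /= /PCd /= /Cd /= cmD cmc cdD -!addrA.
Defined.
Lemma ses_coneg A B (g : chainmap A B) : ses (coneI g) (coneP g).
Proof.
move=> n; split; first by move=> x y /= e; exact: (congr1 (fun z => z.1.1) e).
split; first by move=> [b a]; exists ((0, a), b); rewrite /= cm0 addr0.
move=> [[x1 x2] y] /=; split.
  move=> e; exists x1; have e1 : y + cmap g n x1 = 0 := congr1 fst e.
  have e2 : x2 = 0 := congr1 snd e.
  rewrite e2; congr pair; by rewrite -[RHS](addrK (cmap g n x1)) e1 sub0r.
by case=> x [-> <- <-]; rewrite /= addNr.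
Qed.

Section Closed2.
Variables (A0 : chain R) (P : chain R -> Prop) (hP : closedC A0 P).

Lemma P_acyclic X : acyclic X -> P X.
Proof.
move=> hX.
pose F := fun e : False => match e return chain R with end.
have hD : forall n (u : cmod (DC F) n), u = 0.
  by move=> n u; apply: dsE => -[].
apply: (P_weq hP (f := zeroC (DC F) X)).
  move=> n; split.
    by move=> x _ _; rewrite (hD n x); exact: bd0.
  move=> y hy; exists 0; split; first exact: cy0.
  by rewrite /= sub0r; apply: bdN; apply: hX.
apply: (P_dsum hP (@DC_dsum R False F)) => -[].
Qed.

Lemma P_PC C B : P C -> P B -> P (PC C B).
Proof. move=> hC hB; apply: (P_dsum hP (@PC_dsum C B)); by case. Qed.

Lemma P_shift X : P X -> P (shift X).
Proof.
move=> hX; apply: (P_ses hP (ses_cone X)) => //; apply: P_acyclic; exact: Cone_id_acyclic.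
Qed.

Lemma P_cone A B (g : chainmap A B) : P A -> P B -> P (Cone g).
Proof.
move=> hA hB; apply: (P_ses hP (ses_coneg g)) => //; apply: P_PC => //.
apply: P_acyclic; exact: Cone_id_acyclic.
Qed.

Lemma P_shiftn n X : P X -> P (shiftn n X).
Proof. elim: n => [|n IH] // hX; exact: (P_shift (IH hX)). Qed.

Lemma P_bij X Y (f : chainmap X Y) :
  (forall n, injective (cmap f n)) -> (forall n y, exists x, cmap f n x = y) -> P X -> P Y.
Proof. by move=> hi hs; apply: (P_weq hP (bij_weq hi hs)). Qed.
Lemma P_bijr X Y (f : chainmap X Y) :
  (forall n, injective (cmap f n)) -> (forall n y, exists x, cmap f n x = y) -> P Y -> P X.
Proof. by move=> hi hs; apply: (P_weqr hP (bij_weq hi hs)). Qed.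
End Closed2.
End Constr.

Lemma memIc (T : eqType) (s : seq T) (x : T) : (x \in (s : seq {classic T})) = (x \in s).
Proof.
elim: s => [|a s IH] //; rewrite in_cons [LHS]in_cons IH; congr (_ || _).
by apply/idP/idP => /eqP ->.
Qed.
Lemma uniqIc (T : eqType) (s : seq T) : uniq (s : seq {classic T}) = uniq s.
Proof. elim: s => [|a s IH] //. rewrite cons_uniq [LHS]cons_uniq IH. congr (~~ _ && _); exact: (memIc s a). Qed.

Lemma memIcN (T : eqType) (s : seq T) (x : T) : (x \in (s : seq (Ic T))) = (x \in s).
Proof. exact: (memIc s x). Qed.
Lemma uniqIcN (T : eqType) (s : seq T) : uniq (s : seq (Ic T)) = uniq s.
Proof. exact: (uniqIc s). Qed.

Section NatSum.
Variables (R : comPzRingType) (M : nat -> lmodType R).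

Lemma ds_bound (u : dsum M) : exists N, forall n, (N <= n)%N -> dv u n = 0.
Proof.
exists (\max_(i <- (supp u : seq nat)) i).+1 => n hn; apply: supp_out.
apply/negP => hin.
have : (n <= \max_(i <- (supp u : seq nat)) i)%N.
  apply: (@leq_bigmax_seq _ (supp u : seq nat) xpredT (fun i => i)) => //.
  by rewrite -(@memIcN nat).
by rewrite leqNgt hn.
Qed.

Lemma fs_bound (f : forall n, M n) N : (forall n, (N <= n)%N -> f n = 0) -> finsupp f.
Proof.
move=> h; exists (iota 0 N : seq (Ic nat)) => n; rewrite (@memIcN nat) mem_iota add0n /= => hn.
by apply: h; rewrite leqNgt.
Qed.

Lemma dsoutE_nat (N' : lmodType R) (G : forall i, M i -> N') (u : dsum M) N :
  (forall i, Rlinear (G i)) -> (forall n, (N <= n)%N -> dv u n = 0) ->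
  dsout G u = \sum_(0 <= i < N) G i (dv u i).
Proof.
move=> hG h; rewrite (@dsoutE _ _ _ _ _ hG u (iota 0 N : seq (Ic nat))).
- by rewrite /index_iota subn0.
- by rewrite (@uniqIcN nat) iota_uniq.
move=> n; rewrite (@memIcN nat) mem_iota add0n /= => hn; apply: h; by rewrite leqNgt.
Qed.
End NatSum.

Section Colim.
Variable R : comPzRingType.
Variables (A0 : chain R) (P : chain R -> Prop) (hP : closedC A0 P).
Variables (Y : nat -> chain R) (phi : forall n, chainmap (Y n) (Y n.+1)).
Variables (X : chain R) (psi : forall n, chainmap (Y n) X).
Hypothesis hcomp : forall n k y, cmap (psi n.+1) k (cmap (phi n) k y) = cmap (psi n) k y.
Hypothesis hsurj : forall k x, exists n y, cmap (psi n) k y = x.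
Hypothesis hker : forall n k y, cmap (psi n) k y = 0 -> cmap (phi n) k y = 0.

Definition tf k (u : cmod (DC Y) k) : forall n, cmod (Y n) k :=
  fun n => match n with 0 => dv u 0 | m.+1 => dv u m.+1 - cmap (phi m) k (dv u m) end.
Lemma fs_tf k u : finsupp (@tf k u).
Proof.
have [N hN] := ds_bound u; apply: (@fs_bound _ _ _ N.+1) => -[|n] hn //.
by rewrite /tf !hN ?cm0 ?subrr // ltnW.
Qed.
Definition tmap k (u : cmod (DC Y) k) : cmod (DC Y) k := DS (fs_tf u).
Lemma tmap_lin k : Rlinear (@tmap k).
Proof.
move=> a u v; apply: dsE => -[|n] //=.
by rewrite cmD cmZ opprD scalerBr -!addrA; congr (_ + _); rewrite addrCA.
Qed.
Lemma tmap_comm k u : tmap (cd (DC Y) k u) = cd (DC Y) k (tmap u).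
Proof. apply: dsE => -[|n] //=; by rewrite cdB cmc. Qed.
Definition T : chainmap (DC Y) (DC Y) := @ChainMap R (DC Y) (DC Y) tmap tmap_lin tmap_comm.

Lemma P_colim : (forall n, P (Y n)) -> P X.
Proof.
move=> hY.
have [p [ep _]] := @DC_dsum R nat Y X psi.
have hl : forall k i, Rlinear (cmap (psi i) k) by move=> k i; exact: (cmap_lin _ _ _ (psi i) k).
have pE : forall k u N, (forall n, (N <= n)%N -> dv u n = 0) ->
    cmap p k u = \sum_(0 <= i < N) cmap (psi i) k (dv u i).
  move=> k u N hN; rewrite (@dsout_uniq _ _ _ _ (fun i => cmap (psi i) k)) //.
  - exact: dsoutE_nat.
  - exact: (cmap_lin _ _ _ p k).
  - move=> i x; exact: ep.
apply: (P_ses hP (i := T) (p := p)); last 2 first.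
- by apply: (P_dsum hP (@DC_dsum R nat Y)).
- by apply: (P_dsum hP (@DC_dsum R nat Y)).
move=> k; split; [|split].
-
  have h0 : forall w : cmod (DC Y) k, @tmap k w = 0 -> w = 0.
    move=> w hw; apply: (@dsE R nat (fun n => cmod (Y n) k)) => n; elim: n => [|n IH].
      by have := congr1 (fun z => dv z 0) hw.
    have := congr1 (fun z => dv z n.+1) hw; rewrite /= IH cm0 subr0; by [].
  move=> u v e; apply/eqP; rewrite -subr_eq0; apply/eqP; apply: h0.
  by rewrite (linB (@tmap_lin k)); move: e => /= ->; rewrite subrr.
- move=> x; have [n [y <-]] := @hsurj k x; exists (cmap (iotaC Y n) k y); exact: ep.
- move=> w; split.
  + move=> hw.
    have [N hN] := ds_bound w.
    pose fix vf m : cmod (Y m) k :=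
      match m with 0 => dv w 0 | m'.+1 => dv w m'.+1 + cmap (phi m') k (vf m') end.
    have hpv : forall m, cmap (psi m) k (vf m) = \sum_(0 <= i < m.+1) cmap (psi i) k (dv w i).
      elim=> [|m IH]; first by rewrite big_nat1.
      by rewrite big_nat_recr //= cmD hcomp IH addrC.
    have vN : cmap (phi N) k (vf N) = 0.
      apply: hker; rewrite hpv -(pE k w N.+1) // => n hn; apply: hN; exact: ltnW.
    have vz : forall m, (N < m)%N -> vf m = 0.
      elim=> [|m IH] //; rewrite ltnS leq_eqVlt => /orP[/eqP <-|hm] /=.
        by rewrite vN hN // addr0.
      by rewrite IH // cm0 hN ?addr0 // ltnW // ltnW.
    have fsv : finsupp vf by apply: (@fs_bound _ _ _ N.+1) => n hn; apply: vz.
    exists (DS fsv); apply: (@dsE R nat (fun n => cmod (Y n) k)) => -[|m] //=; by rewrite addrK.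
  + case=> v <-.
    have [N hN] := ds_bound v.
    rewrite (pE k _ N.+1); last first.
      move=> [|n] hn //=; rewrite !hN ?cm0 ?subrr //; exact: ltnW.
    suff h : forall m, \sum_(0 <= i < m.+1) cmap (psi i) k (dv (tmap v) i) = cmap (psi m) k (dv v m).
      by rewrite h hN // cm0.
    elim=> [|m IH]; first by rewrite big_nat1.
    by rewrite big_nat_recr //= IH cmB hcomp addrC subrK.
Qed.
End Colim.

Section Part1.
Variable R : comPzRingType.
Implicit Types X Y Z A B C : chain R.

Lemma factor U V X (a : chainmap U X) (b : chainmap V X) :
  (forall k, injective (cmap b k)) ->
  (forall k u, exists v, cmap b k v = cmap a k u) ->
  exists c : chainmap U V, forall k u, cmap b k (cmap c k u) = cmap a k u.
Proof.
move=> hi hs.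
pose c k u := sval (cid (hs k u)).
have hc : forall k u, cmap b k (c k u) = cmap a k u by move=> k u; exact: (svalP (cid (hs k u))).
have cl : forall k, Rlinear (c k).
  move=> k al u w; apply: (hi k); by rewrite hc cmD cmZ cmD cmZ !hc.
have cc : forall k u, c k (cd U k u) = cd V k (c k.+1 u).
  move=> k u; apply: (hi k); by rewrite hc cmc -hc cmc.
by exists (@ChainMap R U V c cl cc).
Qed.

Definition concmod (M : lmodType R) (n : nat) : lmodType R :=
  match n with 0 => M | _.+1 => zmod0 R end.
Definition conc (M : lmodType R) : chain R :=
  @Chain R (concmod M) (fun n _ => 0) (fun n => @lin_zero _ _ _) (fun n x => erefl).

Definition Kd X n (x : cmod X n.+2) : cmod X n.+1 := - cd X n.+1 x.
Lemma Kd_lin X n : Rlinear (@Kd X n).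
Proof. by move=> a u v; rewrite /Kd cdD cdZ opprD scalerN. Qed.
Lemma Kd_dd X n x : @Kd X n (@Kd X n.+1 x) = 0.
Proof. by rewrite /Kd cdN opprK cdd. Qed.
Definition Kc X : chain R := @Chain R (fun n => cmod X n.+1) (@Kd X) (@Kd_lin X) (@Kd_dd X).

Definition incl0 X : chainmap (conc (cmod X 0)) X.
Proof.
refine (@ChainMap R (conc (cmod X 0)) X
  (fun n => match n return cmod (conc (cmod X 0)) n -> cmod X n with
            | 0 => fun x => x | _.+1 => fun _ => 0 end) _ _).
- by case=> [|n] a u v //; rewrite scaler0 addr0.
- by case=> [|n] x /=; rewrite cd0.
Defined.

Section TruncStep.
Variables (X T' : chain R) (i' : chainmap T' (Kc X)).
Definition tphi : chainmap T' (conc (cmod X 0)).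
Proof.
refine (@ChainMap R T' (conc (cmod X 0))
  (fun n => match n return cmod T' n -> cmod (conc (cmod X 0)) n with
            | 0 => fun t => cd X 0 (cmap i' 0 t) | _.+1 => fun _ => 0 end) _ _).
- case=> [|n] a u v /=; last by rewrite scaler0 addr0.
  by rewrite cmD cmZ cdD cdZ.
- case=> [|n] x //=; by rewrite cmc /= /Kd cdN cdd oppr0.
Defined.
Definition tincl : chainmap (Cone tphi) X.
Proof.
refine (@ChainMap R (Cone tphi) X
  (fun n => match n return cmod (Cone tphi) n -> cmod X n with
            | 0 => fun x => x.1 | k.+1 => fun x => cmap i' k x.2 end) _ _).
- case=> [|n] a u v //=; by rewrite cmD cmZ.
- case=> [|n] x /=; first by rewrite add0r.
  by rewrite cmN cmc /= /Kd opprK.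
Defined.
End TruncStep.

Fixpoint trunc (n : nat) : forall X : chain R, {T : chain R & chainmap T X} :=
  match n with
  | 0 => fun X => existT _ (conc (cmod X 0)) (incl0 X)
  | n'.+1 => fun X => let r := trunc n' (Kc X) in
             existT _ (Cone (tphi (projT2 r))) (tincl (projT2 r))
  end.

Section ClosedP.
Variables (A0 : chain R) (P : chain R -> Prop) (hP : closedC A0 P).

Lemma P_trunc n : forall X, (forall k, P (conc (cmod X k))) -> P (projT1 (trunc n X)).
Proof.
elim: n => [|n IH] X hX //=.
apply: (P_cone hP); last exact: hX.
by apply: IH => k; exact: hX.
Qed.
End ClosedP.

Lemma trunc_inj n : forall X k, injective (cmap (projT2 (trunc n X)) k).
Proof.
elim: n => [|n IH] X [|k] /=.
- by move=> x y.
- by move=> x y _; rewrite (z0 x) (z0 y).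
- by move=> [x1 x2] [y1 y2] /= e; rewrite e (z0 x2) (z0 y2).
- move=> [x1 x2] [y1 y2] /= e; rewrite (z0 x1) (z0 y1); congr pair; exact: (IH (Kc X) k x2 y2 e).
Qed.

Lemma trunc_im n : forall X k (x : cmod X k), (k <= n)%N ->
  exists t, cmap (projT2 (trunc n X)) k t = x.
Proof.
elim: n => [|n IH] X [|k] x //= hk.
- by exists x.
- by exists (x, 0).
- have [t ht] := IH (Kc X) k x hk. by exists (0, t).
Qed.

Lemma trunc_zero n : forall X k t, (n < k)%N -> cmap (projT2 (trunc n X)) k t = 0.
Proof.
elim: n => [|n IH] X [|k] t //= hk.
exact: (IH (Kc X) k t.2 hk).
Qed.

Lemma trunc_sub n X k (t : cmod (projT1 (trunc n X)) k) :
  exists t', cmap (projT2 (trunc n.+1 X)) k t' = cmap (projT2 (trunc n X)) k t.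
Proof.
case: (leqP k n.+1) => hk.
  exact: trunc_im.
exists 0; rewrite cm0 trunc_zero //; exact: ltnW.
Qed.

Section ClosedP2.
Variables (A0 : chain R) (P : chain R -> Prop) (hP : closedC A0 P).
Lemma P_levels X : (forall k, P (conc (cmod X k))) -> P X.
Proof.
move=> hX.
pose Y n := projT1 (trunc n X).
pose psi n : chainmap (Y n) X := projT2 (trunc n X).
have hf : forall n, exists c : chainmap (Y n) (Y n.+1), forall k u,
    cmap (psi n.+1) k (cmap c k u) = cmap (psi n) k u.
  move=> n; apply: factor; first exact: trunc_inj.
  move=> k u; exact: trunc_sub.
pose phi n := sval (cid (hf n)).
have hphi : forall n k u, cmap (psi n.+1) k (cmap (phi n) k u) = cmap (psi n) k u.
  move=> n; exact: (svalP (cid (hf n))).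
have hs : forall k x, exists n y, cmap (psi n) k y = x.
  move=> k x; have [t ht] := @trunc_im k X k x (leqnn k); by exists k, t.
have hk : forall n k y, cmap (psi n) k y = 0 -> cmap (phi n) k y = 0.
  move=> n k y hy.
  have : y = 0 by apply: (@trunc_inj n X k); rewrite cm0; exact: hy.
  by move=> ->; rewrite cm0.
have hy : forall n, P (Y n) by move=> n; exact: (P_trunc hP n hX).
exact: (@P_colim R A0 P hP Y phi X psi hphi hs hk hy).
Qed.
End ClosedP2.

End Part1.

Section Part1b.
Variable R : comPzRingType.

Definition free (T : Type) : lmodType R := dsum (fun _ : T => (R^o : lmodType R)).

Definition eb (T : Type) (t : T) : free T := @dinj R T (fun _ => (R^o : lmodType R)) t 1.

Definition freeMap (T : Type) : chainmap (DC (fun _ : T => S0 R)) (conc (free T)).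
Proof.
refine (@ChainMap R (DC (fun _ : T => S0 R)) (conc (free T))
  (fun n => match n return cmod (DC (fun _ : T => S0 R)) n -> cmod (conc (free T)) n with
            | 0 => fun u => u | _.+1 => fun _ => 0 end) _ _).
- by case=> [|n] a u v //; rewrite scaler0 addr0.
- case=> [|n] x //=; by apply: dsE => i.
Defined.

Lemma P_free (P : chain R -> Prop) (hP : closedC (S0 R) P) (T : Type) : P (conc (free T)).
Proof.
apply: (P_bij hP (f := freeMap T)).
- case=> [|n] x y //= _; apply: dsE => i; by rewrite (z0 (dv x i)) (z0 (dv y i)).
- case=> [|n] y; first by exists y.
  by exists 0; rewrite /= (z0 y).
- apply: (P_dsum hP (@DC_dsum R T (fun _ => S0 R))) => _; exact: P_A hP.
Qed.

Section Res.
Variable M : lmodType R.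

Fixpoint QQ (k : nat) : lmodType R :=
  match k with 0 => M | k'.+1 => free (QQ k') end.

Lemma scl_lin (V : lmodType R) (y : V) : Rlinear (fun r : R^o => r *: y).
Proof. by move=> a u v; rewrite scalerDl scalerA. Qed.

Fixpoint delta (k : nat) : QQ k.+1 -> QQ k :=
  match k return QQ k.+1 -> QQ k with
  | 0 => dsout (fun (m : M) (r : R^o) => r *: m)
  | k'.+1 => dsout (fun (x : QQ k'.+1) (r : R^o) => r *: (if `[< @delta k' x = 0 >] then x else 0))
  end.
Arguments delta k _ : clear implicits.

Lemma delta_lin k : Rlinear (delta k).
Proof. case: k => [|k] /=; apply: dsout_lin => i; exact: scl_lin. Qed.

Lemma delta_e k (x : QQ k.+1) : delta k.+1 (eb x) = if `[< delta k x = 0 >] then x else 0.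
Proof. by rewrite /= dsout_inj ?scale1r // => i; exact: scl_lin. Qed.
Lemma delta0_e (m : M) : delta 0 (eb m) = m.
Proof. by rewrite /= dsout_inj ?scale1r // => i; exact: scl_lin. Qed.

Lemma delta_dd k (u : QQ k.+2) : delta k (delta k.+1 u) = 0.
Proof.
rewrite /= (dsoutE _ (supp_uniq u) (@supp_out _ _ _ u)); last by move=> i; exact: scl_lin.
rewrite (lin_sum (@delta_lin k)) big1 // => i _.
rewrite (linZ (@delta_lin k)); case: asboolP => [->|_]; first by rewrite scaler0.
by rewrite (lin0 (@delta_lin k)) scaler0.
Qed.

Lemma delta_ker k (x : QQ k.+1) : delta k x = 0 -> exists y, delta k.+1 y = x.
Proof. move=> h; exists (eb x); rewrite delta_e; by case: asboolP. Qed.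

Definition Res : chain R :=
  @Chain R (fun n => QQ n.+1) (fun n => delta n.+1) (fun n => @delta_lin n.+1) (fun n x => delta_dd x).

Definition eps : chainmap Res (conc M).
Proof.
refine (@ChainMap R Res (conc M)
  (fun n => match n return cmod Res n -> cmod (conc M) n with
            | 0 => delta 0 | _.+1 => fun _ => 0 end) _ _).
- case=> [|n] a u v /=; first exact: (@delta_lin 0 a u v).
  by rewrite scaler0 addr0.
- case=> [|n] x; [exact: (@delta_dd 0 x) | by []].
Defined.

Lemma eps_weq : weq eps.
Proof.
case=> [|n]; split.
- move=> x _ [y hy]; apply: delta_ker; exact: (esym hy).
- move=> m _; exists (eb m); split => //; have -> : cmap eps 0 (eb m) = m := delta0_e m; rewrite subrr; exact: bd0.
- move=> x hx _; exact: delta_ker.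
- move=> y _; exists 0; split; first exact: cy0.
  by rewrite (z0 (_ - _)); exact: bd0.
Qed.
End Res.

Lemma part1 (X : chain R) : cellular X (S0 R).
Proof.
move=> P hP.
have hM : forall M : lmodType R, P (conc M).
  move=> M; apply: (P_weq hP (@eps_weq M)).
  apply: (P_levels hP) => k; exact: P_free.
apply: (P_levels hP) => k; exact: hM.
Qed.

End Part1b.

Section Sub.
Variables (R : comPzRingType) (V : lmodType R) (S : V -> Prop).
Hypotheses (S0 : S 0) (SD : forall x y, S x -> S y -> S (x + y))
           (SZ : forall a x, S x -> S (a *: x)).
Record subT := SubE { sv : V ; sp : S sv }.
Lemma subT_eq (u v : subT) : sv u = sv v -> u = v.
Proof.
case: u v => [u hu] [v hv] /= e; subst v; by rewrite (proof_irrelevance _ hu hv).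
Qed.
HB.instance Definition _ := gen_eqMixin subT.
HB.instance Definition _ := gen_choiceMixin subT.
Lemma SN x : S x -> S (- x). Proof. by move=> h; rewrite -scaleN1r; apply: SZ. Qed.
Definition sb0 := SubE S0.
Definition sbadd (u v : subT) := SubE (SD (sp u) (sp v)).
Definition sbopp (u : subT) := SubE (SN (sp u)).
Definition sbscale a (u : subT) := SubE (SZ a (sp u)).
Lemma sbaddA : associative sbadd. Proof. by move=> ???; apply: subT_eq => /=; rewrite addrA. Qed.
Lemma sbaddC : commutative sbadd. Proof. by move=> ??; apply: subT_eq => /=; rewrite addrC. Qed.
Lemma sbadd0 : left_id sb0 sbadd. Proof. by move=> ?; apply: subT_eq => /=; rewrite add0r. Qed.
Lemma sbaddN : left_inverse sb0 sbopp sbadd. Proof. by move=> ?; apply: subT_eq => /=; rewrite addNr. Qed.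
HB.instance Definition _ := GRing.isZmodule.Build subT sbaddA sbaddC sbadd0 sbaddN.
Lemma sbZA a b v : sbscale a (sbscale b v) = sbscale (a * b) v.
Proof. by apply: subT_eq => /=; rewrite scalerA. Qed.
Lemma sbZ1 : left_id 1 sbscale. Proof. by move=> ?; apply: subT_eq => /=; rewrite scale1r. Qed.
Lemma sbZDr : right_distributive sbscale +%R.
Proof. by move=> ???; apply: subT_eq => /=; rewrite scalerDr. Qed.
Lemma sbZDl v : {morph sbscale^~ v: a b / a + b}.
Proof. by move=> ??; apply: subT_eq => /=; rewrite scalerDl. Qed.
HB.instance Definition _ := GRing.Zmodule_isLmodule.Build R subT sbZA sbZ1 sbZDr sbZDl.
Definition subm : lmodType R := subT.
Lemma sv0 : sv (0 : subm) = 0. Proof. by []. Qed.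
Lemma svD (u v : subm) : sv (u + v) = sv u + sv v. Proof. by []. Qed.
Lemma svZ a (u : subm) : sv (a *: u) = a *: sv u. Proof. by []. Qed.
Lemma svN (u : subm) : sv (- u) = - sv u. Proof. by []. Qed.
End Sub.

Section Lift.
Variable R : comPzRingType.

Lemma lift_img (P : lmodType R) (hP : projective P) (M N : lmodType R) (D : M -> N) (phi : P -> N) :
  Rlinear D -> Rlinear phi -> (forall p, exists m, D m = phi p) ->
  exists psi : P -> M, Rlinear psi /\ forall p, D (psi p) = phi p.
Proof.
move=> hD hphi hex.
pose S (y : N) := exists m, D m = y.
have S0 : S 0 by exists 0; exact: lin0 hD.
have SD : forall x y, S x -> S y -> S (x + y).
  by move=> x y [a <-] [b <-]; exists (a + b); rewrite (linD hD).
have SZ : forall a x, S x -> S (a *: x).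
  by move=> a x [b <-]; exists (a *: b); rewrite (linZ hD).
pose N' := subm S0 SD SZ.
pose p' (m : M) : N' := SubE (ex_intro (fun m' => D m' = D m) m erefl).
pose g' (p : P) : N' := SubE (hex p).
have lp : Rlinear p' by move=> a u v; apply: subT_eq => /=; rewrite hD.
have lg : Rlinear g' by move=> a u v; apply: subT_eq => /=; rewrite hphi.
have sp' : forall y : N', exists x, p' x = y.
  move=> [y [m hm]]; exists m; apply: subT_eq => /=; exact: hm.
have [h [hl hh]] := hP _ _ p' g' lp lg sp'.
exists h; split => // p; exact: (congr1 (@sv _ _ _) (hh p)).
Qed.

Section Whitehead.
Variables (A X Y : chain R) (hA : cofibrant A) (f : chainmap X Y) (hf : weq f) (g : chainmap A Y).

Definition Good n (gp : cmod A n -> cmod X n) (hh : cmod A n -> cmod Y n.+1) : Prop :=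
  [/\ Rlinear gp, Rlinear hh, (forall a : cmod A n.+1, is_cycle (gp (cd A n a))) &
      (forall a : cmod A n.+1, cmap f n (gp (cd A n a)) = cd Y n (cmap g n.+1 a + hh (cd A n a)))].
Arguments Good n gp hh : clear implicits.

Lemma stepE n gp hh : Good n gp hh ->
  exists p : (cmod A n.+1 -> cmod X n.+1) * (cmod A n.+1 -> cmod Y n.+2),
    Good n.+1 p.1 p.2 /\ forall a, cd X n (p.1 a) = gp (cd A n a).
Proof.
case=> lgp lhh G1 G2.
pose D (m : (cmod X n.+1 * cmod Y n.+2)%type) : (cmod X n * cmod Y n.+1)%type :=
  (cd X n m.1, cmap f n.+1 m.1 - cd Y n.+1 m.2).
pose phi (a : cmod A n.+1) : (cmod X n * cmod Y n.+1)%type :=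
  (gp (cd A n a), cmap g n.+1 a + hh (cd A n a)).
have lD : Rlinear D.
  move=> a [u1 u2] [v1 v2]; rewrite /D /= cdD cdZ cmD cmZ cdD cdZ pairZ pairD; congr pair.
  rewrite scalerBr opprD -!addrA; congr (_ + _); rewrite addrCA; congr (_ + _); by rewrite addrC.
have lphi : Rlinear phi.
  move=> a u v; rewrite /phi cdD cdZ lgp cmD cmZ lhh pairZ pairD; congr pair.
  rewrite scalerDr -!addrA; congr (_ + _); rewrite addrCA; congr (_ + _); by rewrite addrC.
have hex : forall a, exists m, D m = phi a.
  move=> a.
  have hu := G1 a. have hfu := G2 a.
  have [x hx] : is_boundary (gp (cd A n a)).
    apply: (proj1 (hf n)) => //; rewrite hfu; exact: bd_cd.
  set v := cmap g n.+1 a + hh (cd A n a) in hfu *.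
  have cyc : is_cycle (cmap f n.+1 x - v).
    by rewrite /= cdB -cmc hx hfu subrr.
  have [x'' [hx'' [w hw]]] := proj2 (hf n.+1) _ cyc.
  exists (x - x'', - w); rewrite /D /phi /=; congr pair.
    by rewrite cdB hx'' subr0.
  by rewrite cdN opprK hw cmB addrA subrK opprB addrC subrK.
have [psi [lpsi hpsi]] := lift_img (@hA n.+1) lD lphi hex.
have e1 : forall b, cd X n (psi b).1 = gp (cd A n b) := fun b => congr1 fst (hpsi b).
have e2 : forall b, cmap f n.+1 (psi b).1 - cd Y n.+1 (psi b).2 = cmap g n.+1 b + hh (cd A n b)
  := fun b => congr1 snd (hpsi b).
exists (fun a => (psi a).1, fun a => (psi a).2); split; last first.
  by move=> a /=; exact: e1.
split => /=.
- by move=> al u v; rewrite lpsi.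
- by move=> al u v; rewrite lpsi.
- move=> a; rewrite /= e1 cdd; exact: (lin0 lgp).
- move=> a; have := e2 (cd A n.+1 a); rewrite /= cdd (lin0 lhh) addr0.
  move/eqP; rewrite subr_eq => /eqP ->; rewrite cmc cdD; by rewrite addrC.
Qed.

Lemma baseE : exists p : (cmod A 0 -> cmod X 0) * (cmod A 0 -> cmod Y 1),
    Good 0 p.1 p.2 /\ forall a, cmap f 0 (p.1 a) - cmap g 0 a = cd Y 0 (p.2 a).
Proof.
pose D (m : (cmod X 0 * cmod Y 1)%type) : cmod Y 0 := cmap f 0 m.1 - cd Y 0 m.2.
have lD : Rlinear D.
  move=> a [u1 u2] [v1 v2]; rewrite /D /= cdD cdZ cmD cmZ.
  rewrite scalerBr opprD -!addrA; congr (_ + _); rewrite addrCA; congr (_ + _); by rewrite addrC.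
have hex : forall a, exists m, D m = cmap g 0 a.
  move=> a; have [x [_ [w hw]]] := proj2 (hf 0) (cmap g 0 a) I.
  exists (x, w); rewrite /D /= hw opprB addrC subrK; by [].
have [psi [lpsi hpsi]] := lift_img (@hA 0) lD (cmap_lin _ _ _ g 0) hex.
have rel : forall a, cmap f 0 (psi a).1 - cmap g 0 a = cd Y 0 (psi a).2.
  by move=> a; rewrite -hpsi /D opprB addrC subrK.
exists (fun a => (psi a).1, fun a => (psi a).2); split => //.
split => /=.
- by move=> al u v; rewrite lpsi.
- by move=> al u v; rewrite lpsi.
- by [].
- move=> a; have := rel (cd A 0 a); move/eqP; rewrite subr_eq => /eqP ->.
  by rewrite cmc cdD addrC.
Qed.

Definition baseS := cid baseE.
Definition stepS n gp hh (h : Good n gp hh) := cid (stepE h).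

Fixpoint seqst n : {p : (cmod A n -> cmod X n) * (cmod A n -> cmod Y n.+1) | Good n p.1 p.2} :=
  match n with
  | 0 => exist _ (sval baseS) (proj1 (svalP baseS))
  | m.+1 => let s := seqst m in
            exist _ (sval (stepS (svalP s))) (proj1 (svalP (stepS (svalP s))))
  end.

Lemma whitehead : exists g' : chainmap A X,
  forall a : cmod A 0, is_boundary (cmap f 0 (cmap g' 0 a) - cmap g 0 a).
Proof.
pose gp n := (sval (seqst n)).1.
have lin : forall n, Rlinear (gp n) by move=> n; case: (svalP (seqst n)).
have comm : forall n a, gp n (cd A n a) = cd X n (gp n.+1 a).
  move=> n a; rewrite /gp /=; exact: (esym (proj2 (svalP (stepS (svalP (seqst n)))) a)).
exists (@ChainMap R A X gp lin comm) => a /=.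
have := proj2 (svalP baseS) a; rewrite /gp /= => ->; exact: bd_cd.
Qed.
End Whitehead.
End Lift.

Section Part4.
Variable R : comPzRingType.
Variable A : chain R.

Definition ev X (l : seq {g : chainmap A X & cmod A 0}) : cmod X 0 :=
  \sum_(p <- l) cmap (projT1 p) 0 (projT2 p).
Definition mapc X Z (h : chainmap X Z) (l : seq {g : chainmap A X & cmod A 0}) :
  seq {g : chainmap A Z & cmod A 0} :=
  map (fun p => existT (fun _ => cmod A 0) (compC h (projT1 p)) (projT2 p)) l.
Lemma ev_mapc X Z (h : chainmap X Z) l : ev (mapc h l) = cmap h 0 (ev l).
Proof. by rewrite /ev /mapc big_map cm_sum. Qed.
Lemma ev_cat X (l1 l2 : seq {g : chainmap A X & cmod A 0}) : ev (l1 ++ l2) = ev l1 + ev l2.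
Proof. by rewrite /ev big_cat. Qed.

Definition Qiv (X : chain R) : Prop :=
  forall y : cmod X 0, exists l, is_boundary (y - @ev X l).

Lemma Qiv_closed : cofibrant A -> closedC A Qiv.
Proof.
move=> hA; split; [|split; [|split]].
- move=> y; exists [:: existT _ (idC A) y]; rewrite /ev big_seq1 /= subrr; exact: bd0.
- move=> I Xi Y iota hY hQ y.
  have [phi [_ [hs hphi]]] := dsum_iso hY.
  have [u <-] := hs 0 y.
  have key : forall s : seq (Ic I), exists l,
      is_boundary (\sum_(i <- s) cmap (iota i) 0 (dv u i) - ev l).
    elim=> [|i s [l' hl']]; first by exists [::]; rewrite big_nil /ev big_nil subrr; exact: bd0.
    have [li hli] := hQ i (dv u i).
    exists (mapc (iota i) li ++ l'); rewrite big_cons ev_cat ev_mapc.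
    have -> : cmap (iota i) 0 (dv u i) + \sum_(j <- s) cmap (iota j) 0 (dv u j) -
              (cmap (iota i) 0 (ev li) + ev l') =
              cmap (iota i) 0 (dv u i - ev li) + (\sum_(j <- s) cmap (iota j) 0 (dv u j) - ev l').
      by rewrite cmB addsub4.
    by apply: bdD => //; apply: bdcm.
  have [l hl] := key (supp u); exists l.
  have -> : cmap phi 0 u = \sum_(i <- supp u) cmap (iota i) 0 (dv u i).
    rewrite {1}(ds_decomp (supp_uniq u) (@supp_out _ _ _ u)) cm_sum.
    by apply: eq_bigr => i _; rewrite -hphi.
  exact: hl.
- move=> X Y f hf; split.
  + move=> hX y.
    have [x [_ hx]] := proj2 (hf 0) y I.
    have [l hl] := hX x.
    exists (mapc f l); rewrite ev_mapc.
    have -> : y - cmap f 0 (ev l) = cmap f 0 (x - ev l) - (cmap f 0 x - y).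
      by rewrite cmB subsub3.
    by apply: bdB => //; apply: bdcm.
  + move=> hY x.
    have [l hl] := hY (cmap f 0 x).
    have key : forall l : seq {g : chainmap A Y & cmod A 0}, exists l',
        is_boundary (cmap f 0 (ev l') - ev l).
      elim=> [|[g a] l0 [l' hl']]; first by exists [::]; rewrite /ev !big_nil cm0 subrr; exact: bd0.
      have [g' hg'] := whitehead hA hf g.
      exists (existT _ g' a :: l'); rewrite /ev !big_cons /= cmD.
      have -> : cmap f 0 (cmap g' 0 a) + cmap f 0 (\sum_(p <- l') cmap (projT1 p) 0 (projT2 p)) -
                (cmap g 0 a + \sum_(p <- l0) cmap (projT1 p) 0 (projT2 p)) =
                (cmap f 0 (cmap g' 0 a) - cmap g 0 a) + (cmap f 0 (ev l') - ev l0).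
        by rewrite addsub4.
      exact: bdD.
    have [l' hl'] := key l.
    exists l'; apply: (proj1 (hf 0)) => //.
    have -> : cmap f 0 (x - ev l') = (cmap f 0 x - ev l) - (cmap f 0 (ev l') - ev l).
      by rewrite cmB subsub4.
    exact: bdB.
- move=> X1 X2 X3 i p hses _ h2 y.
  have [y2 hy2] := proj1 (proj2 (hses 0)) y.
  have [l hl] := h2 y2.
  exists (mapc p l); rewrite ev_mapc -hy2 -cmB; exact: bdcm.
Qed.

Lemma part4 (X : chain R) : cofibrant A -> cellular X A ->
  exists (I : Type) (Y : chain R) (iota : forall i : I, chainmap A Y),
       @is_dsum R I (fun _ : I => A) Y iota /\
       exists f : chainmap Y X, Hsurj f 0.
Proof.
move=> hA hX.
have hQ := hX _ (Qiv_closed hA).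
exists (chainmap A X), (DC (fun _ : chainmap A X => A)), (iotaC (fun _ : chainmap A X => A)).
split; first exact: DC_dsum.
have [f [ef _]] := @DC_dsum R (chainmap A X) (fun _ => A) X (fun g => g).
exists f => y _.
have [l hl] := hQ y.
exists (\sum_(q <- l) cmap (iotaC (fun _ : chainmap A X => A) (projT1 q)) 0 (projT2 q)); split => //.
rewrite cm_sum (eq_bigr (fun q => cmap (projT1 q) 0 (projT2 q))); last by move=> q _; exact: ef.
rewrite -opprB; exact: bdN.
Qed.
End Part4.

Section Part6a.
Variable R : comPzRingType.
Implicit Types X Y Z A B C : chain R.

Definition shiftC X Y (f : chainmap X Y) : chainmap (shift X) (shift Y).
Proof.
refine (@ChainMap R (shift X) (shift Y)
  (fun n => match n return cmod (shift X) n -> cmod (shift Y) n with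
            | 0 => fun _ => 0 | k.+1 => cmap f k end) _ _).
- case=> [|n] a u v /=; [by rewrite scaler0 addr0 | exact: cmap_lin].
- case=> [|n] x //=; by rewrite cmN cmc.
Defined.

Lemma sh_cycle X k (x : cmod X k) : @is_cycle R (shift X) k.+1 x <-> is_cycle x.
Proof.
case: k x => [|k] x /=; first by split.
split => h; last by rewrite h oppr0.
by rewrite -[cd X k x]opprK h oppr0.
Qed.

Lemma sh_bd X k (x : cmod X k) : @is_boundary R (shift X) k.+1 x <-> is_boundary x.
Proof.
split; move=> [y hy]; exists (- y).
  by move: hy; rewrite /= => <-; rewrite cdN.
by rewrite /= cdN opprK.
Qed.

Lemma sh0_bd X (x : cmod (shift X) 0) : is_boundary x.
Proof. by rewrite (z0 x); exact: bd0. Qed.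

Lemma sh_weq X Y (f : chainmap X Y) : weq f -> weq (shiftC f).
Proof.
move=> hf [|k]; split.
- by move=> x _ _; exact: sh0_bd.
- move=> y _; exists 0; split; [exact: cy0 | exact: sh0_bd].
- move=> x /sh_cycle hx /sh_bd hb; apply/sh_bd; exact: (proj1 (hf k)).
- move=> y /sh_cycle hy; have [x [hx hb]] := proj2 (hf k) y hy.
  by exists x; split; [apply/sh_cycle | apply/sh_bd].
Qed.

Lemma sh_ses X Y Z (i : chainmap X Y) (p : chainmap Y Z) : ses i p -> ses (shiftC i) (shiftC p).
Proof.
move=> h [|k].
  split; first by move=> x y _; rewrite (z0 x) (z0 y).
  split; first by move=> z; exists 0; rewrite (z0 z).
  by move=> y; split => _ //; exists 0; rewrite (z0 y).
exact: (h k).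
Qed.

Section ShDsum.
Variables (I : Type) (Xi : I -> chain R).
Definition shDC : chainmap (DC (fun i => shift (Xi i))) (shift (DC Xi)).
Proof.
refine (@ChainMap R (DC (fun i => shift (Xi i))) (shift (DC Xi))
  (fun n => match n return cmod (DC (fun i => shift (Xi i))) n -> cmod (shift (DC Xi)) n with
            | 0 => fun _ => 0 | k.+1 => fun u => u end) _ _).
- case=> [|n] a u v //=; by rewrite scaler0 addr0.
- case=> [|n] x //=; by apply: dsE => i.
Defined.
Lemma shDC_bij : (forall n, injective (cmap shDC n)) /\ (forall n y, exists x, cmap shDC n x = y).
Proof.
split.
  case=> [|n] x y //= _; apply: dsE => i; by rewrite (z0 (dv x i)) (z0 (dv y i)).
case=> [|n] y; last by exists y.
by exists 0; rewrite (z0 y).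
Qed.
End ShDsum.

Lemma part6a A X : cellular X A -> cellular (shift X) (shift A).
Proof.
move=> hX P hP.
pose P' := fun Z => P (shift Z).
suff : closedC A P' by move=> h; exact: (hX P' h).
split; [|split; [|split]].
- exact: P_A hP.
- move=> I Xi Y iota hY hi.
  have [phi [inj [sur _]]] := dsum_iso hY.
  rewrite /P'; apply: (P_bij hP (f := shiftC phi)).
  + case=> [|n] x y /= e; [by rewrite (z0 x) (z0 y) | exact: (inj n _ _ e)].
  + case=> [|n] y; [by exists 0; rewrite (z0 y) | exact: sur].
  have [bi bs] := shDC_bij Xi.
  apply: (P_bij hP bi bs); apply: (P_dsum hP (@DC_dsum R I (fun i => shift (Xi i)))).
  exact: hi.
- move=> X0 Y0 f hf; split => h.
  + exact: (P_weq hP (sh_weq hf)).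
  + exact: (P_weqr hP (sh_weq hf)).
- move=> X1 X2 X3 i p hs h1 h2; exact: (P_ses hP (sh_ses hs)).
Qed.
End Part6a.


Section Part6b.
Variable R : comPzRingType.
Implicit Types X Y Z A B C : chain R.

Section Dk.
Variable Y : chain R.
Definition Kpred (v : cmod Y 1) : Prop := cd Y 0 v = 0.
Lemma K0 : Kpred 0. Proof. exact: cd0. Qed.
Lemma KD x y : Kpred x -> Kpred y -> Kpred (x + y).
Proof. by rewrite /Kpred cdD => -> ->; rewrite addr0. Qed.
Lemma KZ a x : Kpred x -> Kpred (a *: x).
Proof. by rewrite /Kpred cdZ => ->; rewrite scaler0. Qed.
Definition Kmod : lmodType R := subm K0 KD KZ.
Definition Dkmod n : lmodType R := match n with 0 => Kmod | k.+1 => cmod Y k.+2 end.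
Lemma kproof (y : cmod Y 2) : Kpred (- cd Y 1 y).
Proof. by rewrite /Kpred cdN cdd oppr0. Qed.
Definition Dkd n : Dkmod n.+1 -> Dkmod n :=
  match n return Dkmod n.+1 -> Dkmod n with
  | 0 => fun y => (SubE (kproof y) : Kmod)
  | k.+1 => fun y => - cd Y k.+2 y end.
Lemma Dkd_lin n : Rlinear (@Dkd n).
Proof.
case: n => [|n] a u v /=.
  by apply: subT_eq => /=; rewrite cdD cdZ opprD scalerN.
by rewrite cdD cdZ opprD scalerN.
Qed.
Lemma Dkd_dd n x : @Dkd n (@Dkd n.+1 x) = 0.
Proof.
case: n x => [|n] x /=.
  by apply: subT_eq => /=; rewrite cdN opprK cdd.
by rewrite cdN opprK cdd.
Qed.
Definition Dk : chain R := @Chain R Dkmod Dkd Dkd_lin Dkd_dd.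

Lemma dk_cycle k (x : cmod Y k.+2) : @is_cycle R Dk k.+1 x <-> is_cycle x.
Proof.
case: k x => [|k] x /=; split => h.
- have := congr1 (@sv _ _ _) h; rewrite /= => e; by rewrite -[cd Y 1 x]opprK e oppr0.
- by apply: subT_eq => /=; rewrite h oppr0.
- by rewrite -[cd Y k.+2 x]opprK h oppr0.
- by rewrite h oppr0.
Qed.
Lemma dk_bd k (x : cmod Y k.+2) : @is_boundary R Dk k.+1 x <-> is_boundary x.
Proof.
split; move=> [y hy]; exists (- y).
  by move: hy; rewrite /= => <-; rewrite cdN.
by rewrite /= cdN opprK.
Qed.
Lemma dk_bd0 (z : cmod Dk 0) : is_boundary z <-> is_boundary (sv z).
Proof.
split; move=> [y hy]; exists (- y).
  by rewrite cdN; move: hy => /= <-.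
by apply: subT_eq => /=; rewrite cdN opprK.
Qed.
End Dk.

Lemma DkC_pf Y Y' (f : chainmap Y Y') (z : Kmod Y) : Kpred (cmap f 1%N (sv z)).
Proof. by rewrite /Kpred -cmc (sp z) cm0. Qed.
Definition DkC Y Y' (f : chainmap Y Y') : chainmap (Dk Y) (Dk Y').
Proof.
pose pf := @DkC_pf Y Y' f.
refine (@ChainMap R (Dk Y) (Dk Y')
  (fun n => match n return cmod (Dk Y) n -> cmod (Dk Y') n with
            | 0 => fun z => (SubE (pf z) : Kmod Y') | k.+1 => cmap f k.+2 end) _ _).
- case=> [|n] a u v /=; last exact: cmap_lin.
  by apply: subT_eq => /=; rewrite cmD cmZ.
- case=> [|n] x /=; last by rewrite cmN cmc.
  by apply: subT_eq => /=; rewrite cmN cmc.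
Defined.

Lemma DkC_weq Y Y' (f : chainmap Y Y') : weq f -> weq (DkC f).
Proof.
move=> hf [|k]; split.
- move=> z _ /dk_bd0 /= hb; apply/dk_bd0; exact: (proj1 (hf 1%N) (sv z) (sp z) hb).
- move=> z' _; have [x [hx hb]] := proj2 (hf 1%N) (sv z') (sp z').
  exists (SubE (hx : Kpred x)); split => //; apply/dk_bd0; exact: hb.
- move=> x /dk_cycle hx /dk_bd hb; apply/dk_bd; exact: (proj1 (hf k.+2)).
- move=> y /dk_cycle hy; have [x [hx hb]] := proj2 (hf k.+2) y hy.
  by exists x; split; [apply/dk_cycle | apply/dk_bd].
Qed.

Definition H0z Y : Prop := forall y : cmod Y 0, is_boundary y.

Lemma Dk_ses X1 X2 X3 (i : chainmap X1 X2) (p : chainmap X2 X3) :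
  ses i p -> H0z X1 -> ses (DkC i) (DkC p).
Proof.
move=> hs h1 [|k]; last exact: (hs k.+2).
have [ii [ss kk]] := hs 1%N.
have [ii0 [_ kk0]] := hs 0%N.
split; [|split].
- move=> z1 z2 /= e; apply: subT_eq; apply: ii; exact: (congr1 (@sv _ _ _) e).
- move=> z3; have [y2 hy2] := ss (sv z3).
  have pz : cmap p 0 (cd X2 0 y2) = 0 by rewrite cmc hy2 (sp z3).
  have [x1 hx1] := proj1 (kk0 _) pz.
  have [w1 hw1] := h1 x1.
  have pf : Kpred (y2 - cmap i 1%N w1).
    by rewrite /Kpred cdB -cmc hw1 hx1 subrr.
  exists (SubE pf); apply: subT_eq => /=.
  have : cmap p 1%N (cmap i 1%N w1) = 0 by apply/(proj2 (kk _)); exists w1.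
  by rewrite cmB hy2 => ->; rewrite subr0.
- move=> z2; split.
  + move=> e; have e' : cmap p 1%N (sv z2) = 0 := congr1 (@sv _ _ _) e.
    have [x hx] := proj1 (kk _) e'.
    have pf : Kpred x.
      rewrite /Kpred; apply: ii0; by rewrite cm0 cmc hx (sp z2).
    by exists (SubE pf); apply: subT_eq.
  + move=> [z1 <-]; apply: subT_eq => /=; apply/(proj2 (kk _)); by exists (sv z1).
Qed.

Section DkDsum.
Variables (I : Type) (Yi : I -> chain R).
Lemma fs_sv (u : cmod (DC (fun i => Dk (Yi i))) 0) : finsupp (fun i => sv (dv u i)).
Proof. case: (dfs u) => s hs; exists s => i /hs ->; by []. Qed.
Definition dkmap0 (u : cmod (DC (fun i => Dk (Yi i))) 0) : cmod (Dk (DC Yi)) 0.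
Proof.
refine (SubE (_ : Kpred (DS (fs_sv u) : cmod (DC Yi) 1))).
rewrite /Kpred; apply: dsE => i /=; exact: (sp (dv u i)).
Defined.
Definition dkDC : chainmap (DC (fun i => Dk (Yi i))) (Dk (DC Yi)).
Proof.
refine (@ChainMap R (DC (fun i => Dk (Yi i))) (Dk (DC Yi))
  (fun n => match n return cmod (DC (fun i => Dk (Yi i))) n -> cmod (Dk (DC Yi)) n with
            | 0 => dkmap0 | k.+1 => fun u => u end) _ _).
- case=> [|n] a u v //=; apply: subT_eq; by apply: dsE => i.
- case=> [|n] x /=; last by apply: dsE => i.
  by apply: subT_eq; apply: dsE => i.
Defined.
Lemma dkDC_bij : (forall n, injective (cmap dkDC n)) /\ (forall n y, exists x, cmap dkDC n x = y).
Proof.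
split.
  case=> [|n] x y //= e; apply: dsE => i; apply: subT_eq.
  exact: (congr1 (fun z => dv (sv z) i) e).
case=> [|n] y; last by exists y.
have pf : forall i, Kpred (dv (sv y) i).
  move=> i; exact: (congr1 (fun z => dv z i) (sp y)).
have fs : finsupp (fun i => (SubE (pf i) : Kmod (Yi i))).
  case: (dfs (sv y)) => s hs; exists s => i hi; apply: subT_eq => /=; exact: hs.
by exists (DS fs); apply: subT_eq; apply: dsE => i.
Qed.
End DkDsum.

Definition isoS X : chainmap X (Dk (shift X)).
Proof.
refine (@ChainMap R X (Dk (shift X))
  (fun n => match n return cmod X n -> cmod (Dk (shift X)) n with
            | 0 => fun x => (SubE (erefl 0 : @Kpred (shift X) x) : Kmod (shift X))
            | k.+1 => fun x => x end) _ _).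
- case=> [|n] a u v //; by apply: subT_eq.
- case=> [|n] x /=; last by rewrite opprK.
  by apply: subT_eq => /=; rewrite opprK.
Defined.
Lemma isoS_bij X : (forall n, injective (cmap (isoS X) n)) /\
  (forall n y, exists x, cmap (isoS X) n x = y).
Proof.
split.
  case=> [|n] x y //= e; exact: (congr1 (@sv _ _ _) e).
case=> [|n] y; last by exists y.
by exists (sv y); apply: subT_eq.
Qed.

Lemma part6b A X : cellular (shift X) (shift A) -> cellular X A.
Proof.
move=> hX P hP.
pose P2 := fun Z => H0z Z /\ P (Dk Z).
suff : closedC (shift A) P2.
  move=> h; have [_ hD] := hX P2 h.
  have [bi bs] := isoS_bij X.
  exact: (P_bijr hP bi bs hD).
split; [|split; [|split]].
- split; first by move=> y; rewrite (z0 y); exact: bd0.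
  have [bi bs] := isoS_bij A. exact: (P_bij hP bi bs (P_A hP)).
- move=> I Yi Y iota hY hi.
  have [phi [inj [sur hphi]]] := dsum_iso hY.
  split.
    move=> y; have [u <-] := sur 0%N y.
    rewrite (ds_decomp (supp_uniq u) (@supp_out _ _ _ u)) cm_sum; apply: bd_sum => i.
    move: (hphi i 0%N (dv u i)) => /= ->; apply: bdcm; exact: (proj1 (hi i)).
  have [bi bs] := dkDC_bij Yi.
  apply: (P_bij hP (f := DkC phi)).
  + case=> [|n] x y /= e; last exact: (inj n.+2 _ _ e).
    apply: subT_eq; apply: (inj 1%N); exact: (congr1 (@sv _ _ _) e).
  + case=> [|n] y; last exact: (sur n.+2 y).
    have [x hx] := sur 1%N (sv y).
    have pf : Kpred x.
      rewrite /Kpred; apply: (inj 0%N); by rewrite cm0 cmc hx (sp y).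
    by exists (SubE pf); apply: subT_eq.
  apply: (P_bij hP bi bs); apply: (P_dsum hP (@DC_dsum R I (fun i => Dk (Yi i)))).
  by move=> i; case: (hi i).
- move=> X0 Y0 f hf; split => -[h0 hD]; split.
  + move=> y; have [x [_ [w hw]]] := proj2 (hf 0%N) y I.
    have -> : y = cmap f 0 x - cd Y0 0 w by rewrite hw opprB addrC subrK.
    apply: bdB; [apply: bdcm; exact: h0 | exact: bd_cd].
  + exact: (P_weq hP (DkC_weq hf)).
  + move=> y; apply: (proj1 (hf 0%N)) => //; exact: h0.
  + exact: (P_weqr hP (DkC_weq hf)).
- move=> X1 X2 X3 i p hs [h1 hD1] [h2 hD2]; split.
  + move=> y; have [y2 <-] := proj1 (proj2 (hs 0%N)) y; apply: bdcm; exact: h2.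
  + exact: (P_ses hP (Dk_ses hs h1)).
Qed.


End Part6b.

Lemma part3 (R : comPzRingType) (A X Y : chain R) : cellular Y A -> retract X Y -> cellular X A.
Proof.
move=> hY [s [r hrs]] P hP.
pose phi := fun _ : nat => compC s r.
have hcomp : forall n k (y : cmod Y k), cmap r k (cmap (phi n) k y) = cmap r k y.
  by move=> n k y; rewrite /= hrs.
have hsurj : forall k (x : cmod X k), exists (n : nat) (y : cmod Y k), cmap r k y = x.
  by move=> k x; exists 0%N, (cmap s k x); rewrite hrs.
have hker : forall n k (y : cmod Y k), cmap r k y = 0 -> cmap (phi n) k y = 0.
  by move=> n k y /= ->; rewrite cm0.
exact: (@P_colim R A P hP (fun _ => Y) phi X (fun _ => r) hcomp hsurj hker (fun _ => hY P hP)).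
Qed.

Close Scope ring_scope.

Theorem proposition3p2 (R : comPzRingType) :
  (* (i) every chain complex is S^0-cellular *)
  (forall X : chain R, cellular X (S0 R)) /\
  (* (ii) acyclic complexes are A-cellular for every A *)
  (forall X A : chain R, acyclic X -> cellular X A) /\
  (* (iii) C(A) is closed under retracts *)
  (forall A X Y : chain R, cellular Y A -> retract X Y -> cellular X A) /\
  (* (iv) *)
  (forall A X : chain R, cofibrant A -> cellular X A -> H_nonzero A 0 ->
     exists (I : Type) (Y : chain R) (iota : forall i : I, chainmap A Y),
       @is_dsum R I (fun _ : I => A) Y iota /\
       exists f : chainmap Y X, Hsurj f 0) /\
  (* (v) *)
  (forall (A X : chain R) (n : nat), cellular X A -> cellular (shiftn n X) A) /\
  (* (vi) *)
  (forall A X : chain R, cellular (shift X) (shift A) <-> cellular X A).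
Proof.
split; first exact: part1.
split; first by move=> X A hX P hP; exact: (P_acyclic hP hX).
split; first exact: part3.
split; first by move=> A X hA hX _; exact: part4.
split; first by move=> A X n hX P hP; apply: (P_shiftn hP); exact: hX.
by move=> A X; split; [exact: part6b | exact: part6a].
Qed.
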